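(* For every $d\ge 4$, every $\beta\in(0,\infty)$ and every choice of pairwise distinct energies $E_0=0,E_1,\dots,E_{d-1}$, the convex set $TP(d)$ has an extreme point that is not biplanar.
   Context: Put $q_{m,n}=e^{-\beta(E_m-E_n)}$, $Z=\sum_j q_{j,0}$, $g_i=q_{i,0}/Z$. $TP(d)$ is the set of $d\times d$ real matrices $T$ with non-negative entries, each column summing to $1$, and $Tg=g$. For $T\in TP(d)$, $G(T)$ is the bipartite graph with left vertices $L_0,\dots,L_{d-1}$ (columns), right vertices $R_0,\dots,R_{d-1}$ (rows), and an edge $\{L_j,R_i\}$ iff $T_{ij}>0$. Given orderings $\lambda,\mu$ (permutations of $\{0,\dots,d-1\}$), place $L_{\lambda_a}$ at height $a$ on one vertical line and $R_{\mu_b}$ at height $b$ on a parallel line, edges drawn straight; the drawing is plain if there are no two edges $\{L_{\lambda_a},R_{\mu_b}\}$, $\{L_{\lambda_{a'}},R_{\mu_{b'}}\}$ with $a<a'$ and $b>b'$. An extreme point $T$ of $TP(d)$ is biplanar if some pair $(\lambda,\mu)$ gives a plain drawing of $G(T)$. *)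

(* Defs.v *)
From HB Require Import structures.
From mathcomp Require Import all_boot all_order all_algebra all_fingroup.
From mathcomp Require Import reals sequences exp.
Set Implicit Arguments. Unset Strict Implicit. Unset Printing Implicit Defensive.
Import Order.TTheory GRing.Theory Num.Theory.
Local Open Scope ring_scope.

Definition qf (R : realType) (d : nat) (beta : R) (E : 'I_d -> R) (m n : 'I_d) : R :=
  expR (- (beta * (E m - E n))).

(* Z = sum_j q_{j,0}; 0 is any index with value 0 (d > 0 assumed where used) *)
Definition Zpart (R : realType) (d : nat) (beta : R) (E : 'I_d -> R) (i0 : 'I_d) : R :=
  \sum_(j < d) qf beta E j i0.

Definition gibbs (R : realType) (d : nat) (beta : R) (E : 'I_d -> R) (i0 : 'I_d) : 'cV[R]_d :=
  \col_(i < d) (qf beta E i i0 / Zpart beta E i0).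

Definition TP (R : realType) (d : nat) (beta : R) (E : 'I_d -> R) (i0 : 'I_d)
    (T : 'M[R]_d) : Prop :=
  (forall i j, 0 <= T i j) /\
  (forall j, \sum_(i < d) T i j = 1) /\
  T *m gibbs beta E i0 = gibbs beta E i0.

Definition extreme_point (R : realType) (d : nat) (S : 'M[R]_d -> Prop) (T : 'M[R]_d) : Prop :=
  S T /\
  forall (A B : 'M[R]_d) (t : R), S A -> S B -> 0 < t -> t < 1 ->
    T = t *: A + (1 - t) *: B -> A = B.

(* edge {L_j, R_i} of G(T) iff T_{ij} > 0 *)
Definition edge (R : realType) (d : nat) (T : 'M[R]_d) (j i : 'I_d) : bool := 0 < T i j.

(* lam a = column index placed at height a, mu b = row index placed at height b *)
Definition plain_drawing (R : realType) (d : nat) (T : 'M[R]_d) (lam mu : 'S_d) : Prop :=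
  ~ exists a a' b b' : 'I_d,
      [/\ (a < a')%N, (b' < b)%N, edge T (lam a) (mu b) & edge T (lam a') (mu b')].

Definition biplanar (R : realType) (d : nat) (beta : R) (E : 'I_d -> R) (i0 : 'I_d)
    (T : 'M[R]_d) : Prop :=
  extreme_point (TP beta E i0) T /\ exists lam mu : 'S_d, plain_drawing T lam mu.

(* Main.v *)
Require Import Defs.
From HB Require Import structures.
From mathcomp Require Import all_boot all_order all_algebra all_fingroup.
From mathcomp Require Import reals sequences exp.
From mathcomp Require Import ring lra zify.
Import Order.TTheory GRing.Theory Num.Theory.
Local Open Scope ring_scope.
Set Implicit Arguments. Unset Strict Implicit.

Lemma sum_supp (R : realType) d (f : 'I_d -> R) (s : seq 'I_d) :
  uniq s -> (forall k, k \notin s -> f k = 0) -> \sum_k f k = \sum_(k <- s) f k.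
Proof.
move=> us H; rewrite (big_uniq _ us) [RHS]big_mkcond /=; apply: eq_bigr => k _.
by case: ifP => // /negbT /H.
Qed.

Definition sig d (w x y z : 'I_d) (j : 'I_d) : 'I_d :=
  if j == w then x else if j == x then y else if j == y then z else j.
Definition hf (R : realType) d (g : 'I_d -> R) (w x y z : 'I_d) i :=
  if i == w then 0 else if i == x then g w else if i == y then g x
  else if i == z then g y else g i.
Definition Tm (R : realType) d (g : 'I_d -> R) (w x y z : 'I_d) : 'M[R]_d :=
  \matrix_(i, j) (if j == z then (g i - hf g w x y z i) / g z
                  else if i == sig w x y z j then 1 else 0).

Ltac neqs := repeat match goal with
  | H : is_true (?a != ?b) |- _ => have := negbTE H; rewrite eq_sym in H; have := negbTE H; clear H; move=> ? ?
  end.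

Ltac simpeq := repeat (rewrite ?eqxx /=; repeat match goal with
   | H : (?a == ?b) = false |- context [?a == ?b] => rewrite H
   | H : (?a == ?b) = false |- context [?b == ?a] => rewrite eq_sym H end).
Ltac contr := try (match goal with H : (?a == ?a) = false |- _ => exfalso; by rewrite eqxx in H end).
Ltac ifs := simpeq; repeat (match goal with |- context [if ?a == ?b then _ else _] => is_var a; is_var b; case: (a =P b) => [?|/eqP/negbTE ?]; try subst end; simpeq; contr).

Ltac zero_out := let k := fresh "k" in let Hk := fresh "Hk" in
  move=> k Hk; rewrite ?mxE /hf /sig; ifs; rewrite ?subrr ?mul0r //;
  try by move: Hk; rewrite /sig !inE; simpeq.
Ltac uniqs := rewrite /= ?inE; simpeq.

Lemma neq_of (R : realType) d (g : 'I_d -> R) a b : g a < g b -> a != b.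
Proof. by apply: contraTneq => ->; rewrite ltxx. Qed.

Lemma Tm_TP (R : realType) d (g : 'I_d -> R) (w x y z : 'I_d) :
  0 < g w -> g w < g x -> g x < g y -> g y < g z ->
  (forall i, 0 < g i) ->
  [/\ forall i j, 0 <= Tm g w x y z i j,
      forall j, \sum_i Tm g w x y z i j = 1 &
      forall i, \sum_k Tm g w x y z i k * g k = g i].
Proof.
move=> g0 gwx gxy gyz gpos.
have gwy := lt_trans gwx gxy; have gxz := lt_trans gxy gyz; have gwz := lt_trans gwy gyz.
have nwx := neq_of gwx; have nwy := neq_of gwy; have nwz := neq_of gwz.
have nxy := neq_of gxy; have nxz := neq_of gxz; have nyz := neq_of gyz.
neqs.
split.
{ move=> i j; rewrite mxE /hf /sig; ifs; rewrite ?subrr ?mul0r ?lexx ?ler01 //;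
  apply: divr_ge0; rewrite ?subr_ge0 ?ltW ?gpos //. }
- move=> j; case: (j =P z) => [->|/eqP/negbTE njz].
  + rewrite (@sum_supp _ _ _ [:: w; x; y; z]); [|by uniqs|zero_out].
    rewrite !big_cons big_nil !mxE /hf; simpeq.
    field. by rewrite gt_eqF.
  + rewrite (@sum_supp _ _ _ [:: sig w x y z j]); [|by []|zero_out].
    rewrite big_cons big_nil mxE njz eqxx; simpeq. by rewrite addr0.
- move=> i.
  have gz0 : g z != 0 by rewrite gt_eqF.
  case: (i =P w) => [->|/eqP/negbTE iw].
    rewrite (@sum_supp _ _ _ [:: z]); [|by []|zero_out].
    rewrite !big_cons big_nil !mxE /hf; simpeq. by field.
  case: (i =P x) => [->|/eqP/negbTE ix].
    rewrite (@sum_supp _ _ _ [:: w; z]); [|by uniqs|zero_out].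
    rewrite !big_cons big_nil !mxE /hf /sig; simpeq. by field.
  case: (i =P y) => [->|/eqP/negbTE iy].
    rewrite (@sum_supp _ _ _ [:: x; z]); [|by uniqs|zero_out].
    rewrite !big_cons big_nil !mxE /hf /sig; simpeq. by field.
  case: (i =P z) => [->|/eqP/negbTE iz].
    rewrite (@sum_supp _ _ _ [:: y; z]); [|by uniqs|zero_out].
    rewrite !big_cons big_nil !mxE /hf /sig; simpeq. by field.
  rewrite (@sum_supp _ _ _ [:: i]); [|by []|zero_out].
  rewrite !big_cons big_nil !mxE /hf /sig; simpeq. by rewrite addr0 mul1r.
Qed.

Lemma Tm_unique (R : realType) d (g : 'I_d -> R) (w x y z : 'I_d) (A : 'M[R]_d) :
  0 < g w -> g w < g x -> g x < g y -> g y < g z ->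
  (forall i, 0 < g i) ->
  (forall j, \sum_i A i j = 1) -> (forall i, \sum_k A i k * g k = g i) ->
  (forall i j, Tm g w x y z i j = 0 -> A i j = 0) -> A = Tm g w x y z.
Proof.
move=> g0 gwx gxy gyz gpos colA rowA supp.
have [_ _ rowT] := Tm_TP g0 gwx gxy gyz gpos.
set T := Tm g w x y z in supp rowT *.
have col i j : j != z -> A i j = T i j.
  move=> jz.
  have HT i' : T i' j = (i' == sig w x y z j)%:R by rewrite mxE (negbTE jz); case: eqP.
  have A0 i' : i' != sig w x y z j -> A i' j = 0 by move=> h; apply: supp; rewrite HT (negbTE h).
  have A1 : A (sig w x y z j) j = 1.
    by rewrite -(colA j) (bigD1 (sig w x y z j)) //= big1 ?addr0 // => i' /A0.
  by case: (i =P sig w x y z j) => [->|/eqP h]; rewrite HT ?eqxx // A0 // (negbTE h).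
apply/matrixP => i j; case: (j =P z) => [->|/eqP jz]; last exact: col.
have e1 := rowA i; have e2 := rowT i.
rewrite (bigD1 z) //= in e1; rewrite (bigD1 z) //= in e2.
have es : \sum_(k < d | k != z) A i k * g k = \sum_(k < d | k != z) T i k * g k.
  by apply: eq_bigr => k kz; rewrite col.
apply: (mulIf (negbT (gt_eqF (gpos z)))).
by apply: (addIr (\sum_(k < d | k != z) T i k * g k)); rewrite -{1}es e1 e2.
Qed.

Lemma claw_nat (pc p1 p2 p3 r1 r2 r3 : nat) :
  p1 <> pc -> p2 <> pc -> p3 <> pc -> r1 <> r2 -> r1 <> r3 -> r2 <> r3 ->
  (~ ((p1 < pc)%N /\ (r2 < r1)%N) /\ ~ ((pc < p1)%N /\ (r1 < r2)%N)) ->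
  (~ ((p1 < pc)%N /\ (r3 < r1)%N) /\ ~ ((pc < p1)%N /\ (r1 < r3)%N)) ->
  (~ ((p2 < pc)%N /\ (r1 < r2)%N) /\ ~ ((pc < p2)%N /\ (r2 < r1)%N)) ->
  (~ ((p2 < pc)%N /\ (r3 < r2)%N) /\ ~ ((pc < p2)%N /\ (r2 < r3)%N)) ->
  (~ ((p3 < pc)%N /\ (r1 < r3)%N) /\ ~ ((pc < p3)%N /\ (r3 < r1)%N)) ->
  (~ ((p3 < pc)%N /\ (r2 < r3)%N) /\ ~ ((pc < p3)%N /\ (r3 < r2)%N)) -> False.
Proof. lia. Qed.

Lemma Tm_not_plain (R : realType) d (g : 'I_d -> R) (w x y z : 'I_d) (lam mu : 'S_d) :
  0 < g w -> g w < g x -> g x < g y -> g y < g z ->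
  (forall i, 0 < g i) -> ~ plain_drawing (Tm g w x y z) lam mu.
Proof.
move=> g0 gwx gxy gyz gpos H.
have gwy := lt_trans gwx gxy; have gxz := lt_trans gxy gyz; have gwz := lt_trans gwy gyz.
have nwx := neq_of gwx; have nwy := neq_of gwy; have nwz := neq_of gwz.
have nxy := neq_of gxy; have nxz := neq_of gxz; have nyz := neq_of gyz.
set T := Tm g w x y z in H.
have nc (a a' b b' : 'I_d) : edge T (lam a) (mu b) -> edge T (lam a') (mu b') ->
    ~ ((a < a')%N /\ (b' < b)%N).
  by move=> e1 e2 [h1 h2]; apply: H; exists a, a', b, b'; split.
have E (j i : 'I_d) : 0 < T i j -> edge T (lam ((lam^-1)%g j)) (mu ((mu^-1)%g i)).
  by rewrite /edge !permKV.
have gz0 : g z != 0 by rewrite gt_eqF.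
neqs.
have ec1 : 0 < T x z by rewrite mxE eqxx /hf; simpeq; rewrite divr_gt0 ?subr_gt0.
have ec2 : 0 < T y z by rewrite mxE eqxx /hf; simpeq; rewrite divr_gt0 ?subr_gt0.
have ec3 : 0 < T z z by rewrite mxE eqxx /hf; simpeq; rewrite divr_gt0 ?subr_gt0.
have el1 : 0 < T x w by rewrite mxE /sig; simpeq.
have el2 : 0 < T y x by rewrite mxE /sig; simpeq.
have el3 : 0 < T z y by rewrite mxE /sig; simpeq.
have pn (a b : 'I_d) : (a == b) = false -> nat_of_ord ((lam^-1)%g a) <> nat_of_ord ((lam^-1)%g b).
  by move=> ab /val_inj/perm_inj/eqP; rewrite ab.
have rn (a b : 'I_d) : (a == b) = false -> nat_of_ord ((mu^-1)%g a) <> nat_of_ord ((mu^-1)%g b).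
  by move=> ab /val_inj/perm_inj/eqP; rewrite ab.
have X (jk ik ij : 'I_d) : 0 < T ik jk -> 0 < T ij z ->
  ~ (((lam^-1)%g jk < (lam^-1)%g z)%N /\ ((mu^-1)%g ij < (mu^-1)%g ik)%N) /\
  ~ (((lam^-1)%g z < (lam^-1)%g jk)%N /\ ((mu^-1)%g ik < (mu^-1)%g ij)%N).
  by move=> h1 h2; split; apply: nc; apply: E.
apply: (@claw_nat ((lam^-1)%g z) ((lam^-1)%g w) ((lam^-1)%g x) ((lam^-1)%g y)
   ((mu^-1)%g x) ((mu^-1)%g y) ((mu^-1)%g z)); try (apply: pn || apply: rn; by simpeq).
- exact: X el1 ec2.
- exact: X el1 ec3.
- exact: X el2 ec1.
- exact: X el2 ec3.
- exact: X el3 ec1.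
- exact: X el3 ec2.
Qed.

Lemma four_sorted (R : realType) d (g : 'I_d -> R) : (4 <= d)%N -> injective g ->
  exists w x y z : 'I_d, [/\ g w < g x, g x < g y & g y < g z].
Proof.
move=> d4 ginj.
have h0 : (0 < d)%N by lia. have h1 : (1 < d)%N by lia.
have h2 : (2 < d)%N by lia. have h3 : (3 < d)%N by lia.
pose s := [:: Ordinal h0; Ordinal h1; Ordinal h2; Ordinal h3].
have us : uniq s by [].
pose le := fun a b : 'I_d => g a <= g b.
have tot : total le by move=> a b; exact: le_total.
move: (sort_sorted tot s) (sort_uniq le s) (size_sort le s).
rewrite us.
case: (sort le s) => [|a [|b [|c [|e [|]]]]] //= /and4P[ab bc ce _] /and4P[].
move=> ha hb hc _ _.
exists a, b, c, e; split; rewrite lt_neqAle inj_eq //; apply/andP; (split; last by [apply: ab|apply: bc|apply: ce]).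
- by apply: contra ha => /eqP ->; rewrite !inE eqxx.
- by apply: contra hb => /eqP ->; rewrite !inE eqxx.
- by apply: contra hc => /eqP ->; rewrite !inE eqxx.
Qed.

Lemma gibbs_pos (R : realType) (d : nat) (beta : R) (E : 'I_d -> R) (i0 : 'I_d) i :
  0 < gibbs beta E i0 i ord0.
Proof.
rewrite mxE /Zpart divr_gt0 ?expR_gt0 //.
rewrite (bigD1 i0) //=.
have : 0 <= \sum_(i < d | i != i0) qf beta E i i0 by apply: sumr_ge0 => k _; exact: ltW (expR_gt0 _).
have := expR_gt0 (- (beta * (E i0 - E i0))); rewrite /qf. lra.
Qed.

Lemma gibbs_inj (R : realType) (d : nat) (beta : R) (E : 'I_d -> R) (i0 : 'I_d) :
  0 < beta -> injective E -> injective (fun i => gibbs beta E i0 i ord0).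
Proof.
move=> b0 Einj i j; rewrite !mxE.
have Z0 : Zpart beta E i0 != 0.
  by have := gibbs_pos beta E i0 i; rewrite mxE; apply: contraTneq => ->; rewrite invr0 mulr0 ltxx.
move/(mulIf (invr_neq0 Z0)); rewrite /qf => /expR_inj /oppr_inj /(mulfI (negbT (gt_eqF b0))).
by move/addIr/Einj.
Qed.

Lemma conv0 (R : realType) (a b t : R) : 0 <= a -> 0 <= b -> 0 < t -> t < 1 ->
  t * a + (1 - t) * b = 0 -> a = 0 /\ b = 0.
Proof.
move=> a0 b0 t0 t1 e.
have ta : 0 <= t * a by rewrite mulr_ge0 // ltW.
have tb : 0 <= (1 - t) * b by rewrite mulr_ge0 // subr_ge0 ltW.
have ea : t * a = 0 by lra.
have eb : (1 - t) * b = 0 by lra.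
move/eqP: ea; rewrite mulf_eq0 (gt_eqF t0) /= => /eqP ->.
move/eqP: eb; rewrite mulf_eq0 subr_eq0 (gt_eqF t1) /= => /eqP ->.
by [].
Qed.

Unset Implicit Arguments.
Theorem mainTheorem11 (R : realType) (d : nat) (beta : R) (E : 'I_d -> R) (i0 : 'I_d) :
  (4 <= d)%N -> 0 < beta -> nat_of_ord i0 = 0%N -> E i0 = 0 -> injective E ->
  exists T : 'M[R]_d, extreme_point (TP beta E i0) T /\ ~ biplanar beta E i0 T.
Proof.
move=> d4 b0 _ _ Einj.
pose g : 'I_d -> R := fun i => gibbs beta E i0 i ord0.
have gpos i : 0 < g i by exact: gibbs_pos.
have [w [x [y [z [gwx gxy gyz]]]]] := four_sorted d4 (@gibbs_inj _ _ beta E i0 b0 Einj).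
have g0 := gpos w.
have [Tn Tc Tr] := Tm_TP g0 gwx gxy gyz gpos.
have gE : gibbs beta E i0 = \col_i g i by apply/matrixP => i j; rewrite (ord1 j) mxE.
have gE' k : (\col_i g i) k ord0 = g k by rewrite mxE.
have TPT : TP beta E i0 (Tm g w x y z).
  split; [exact: Tn | split; [exact: Tc|]].
  rewrite gE; apply/matrixP => i j; rewrite (ord1 j) [LHS]mxE gE' -(Tr i).
  by apply: eq_bigr => k _; rewrite gE'.
have uniq A : TP beta E i0 A -> (forall i j, Tm g w x y z i j = 0 -> A i j = 0) -> A = Tm g w x y z.
  move=> [An [Ac Ar]] supp; apply: (Tm_unique g0 gwx gxy gyz gpos Ac _ supp) => i.
  move/matrixP: Ar => /(_ i ord0); rewrite gE [LHS]mxE gE' => <-.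
  by apply: eq_bigr => k _; rewrite gE'.
exists (Tm g w x y z); split.
  split=> // A B t [An HA] [Bn HB] t0 t1 e.
  have ent i j : Tm g w x y z i j = t * A i j + (1 - t) * B i j.
    by rewrite e !mxE.
  have z2 i j : Tm g w x y z i j = 0 -> A i j = 0 /\ B i j = 0.
    move=> h; have := ent i j; rewrite h => /esym; exact: conv0 (An i j) (Bn i j) t0 t1.
  rewrite (uniq A); first (rewrite (uniq B); first by []).
  + by split.
  + by move=> i j /z2 [].
  + by split.
  + by move=> i j /z2 [].
by move=> [_ [lam [mu P]]]; exact: (@Tm_not_plain _ _ g w x y z lam mu g0 gwx gxy gyz gpos).
Qed.
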